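(* Let $\{(X_j,\mathcal R_j,\mu_j):j\in\Lambda\}$ be a family of probability measure spaces indexed by a set $\Lambda$, such that each covering ring $\mathcal R_j$ is complete relative to $\mu_j$ (i.e. $\mathcal R_j=\mathcal R_{\mu_j}$) and each $(X_j,\tau_{\mathcal R_j})$ is Hausdorff. Let $X:=\prod_{j\in\Lambda}X_j$ with the product (Tychonoff) topology, each $X_j$ carrying the topology $\tau_{\mathcal R_j}$, let $\pi_j:X\to X_j$ be the projections, and let $\mathcal R$ be the ring $\bigcup_{j_1,\dots,j_n\in\Lambda,\,n\in\mathbf N}\bigcap_{l=1}^n\pi_{j_l}^{-1}(\mathcal R_{j_l})$ of cylinder sets. Let $\mu:\mathcal R\to\mathbf K$ be a cylindrical distribution, i.e. $\mu\big(\bigcap_{l=1}^n\pi_{j_l}^{-1}(A_l)\big)=\prod_{l=1}^n\mu_{j_l}(A_l)$ for all pairwise distinct $j_1,\dots,j_n\in\Lambda$, $n\in\mathbf N$, and $A_l\in\mathcal R_{j_l}$. Then $\mu$ has an extension to a probability measure $\mu$ on $(X,\mathcal R_\mu)$, where $\mathcal R_\mu$ is the completion of $\mathcal R$ relative to $\mu$.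
   Context: $\mathbf K$ is a field with a nontrivial non-Archimedean valuation $|\cdot|$, $\mathbf K\supset\mathbf Q_p$, complete as an ultrametric space. A covering ring of a set $X$ is a family of subsets closed under finite unions, intersections and differences whose union is $X$; it defines the topology $\tau_{\mathcal R}$ on $X$ with base $\mathcal R$. A subfamily $\mathcal S\subset\mathcal R$ is shrinking if for all $A,B\in\mathcal S$ there is $C\in\mathcal S$ with $C\subset A\cap B$. A measure $\mu:\mathcal R\to\mathbf K$ is finitely additive on disjoint sets, has $\|A\|_\mu:=\sup\{|\mu(B)|:B\in\mathcal R,B\subset A\}<\infty$ for all $A\in\mathcal R$, and satisfies: for every shrinking $\mathcal S\subset\mathcal R$ with empty intersection and every $\epsilon>0$ there is $B\in\mathcal S$ with $|\mu(A)|\le\epsilon$ for all $A\in\mathcal S$, $A\subset B$. A probability measure satisfies $\mu(X)=1$ and $\|\mu\|:=\|X\|_\mu=1$. Put $N_\mu(x):=\inf_{x\in U\in\mathcal R}\|U\|_\mu$. A function $f:X\to\mathbf K$ is $\mu$-integrable if there are $\mathcal R$-step functions $f_n$ (finite $\mathbf K$-linear combinations of characteristic functions of elements of $\mathcal R$) with $\sup_{x\in X}|f(x)-f_n(x)|N_\mu(x)\to0$; the completion $\mathcal R_\mu\supset\mathcal R$ is the ring of subsets $A\subset X$ whose characteristic functions are $\mu$-integrable, and $\mu$ extends to it. *)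

(* Defs.v *)
From Stdlib Require Lists.List.
From mathcomp Require Import all_boot all_order all_algebra.
From mathcomp Require Import boolp classical_sets reals.
Set Implicit Arguments. Unset Strict Implicit. Unset Printing Implicit Defensive.
Import Order.TTheory GRing.Theory Num.Theory.
Local Open Scope classical_set_scope.
Local Open Scope ring_scope.

Definition nonarch_abs (R : realType) (K : fieldType) (v : K -> R) : Prop :=
  [/\ forall x, 0 <= v x,
      forall x, v x = 0 <-> x = 0,
      forall x y, v (x * y) = v x * v y &
      forall x y, v (x + y) <= Num.max (v x) (v y)].

Definition nontrivial_abs (R : realType) (K : fieldType) (v : K -> R) : Prop :=
  exists x, 0 < v x /\ v x < 1.

Definition complete_abs (R : realType) (K : fieldType) (v : K -> R) : Prop :=
  forall u : nat -> K,
    (forall eps : R, 0 < eps -> exists N, forall m n, (N <= m)%N -> (N <= n)%N ->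
        v (u m - u n) <= eps) ->
    exists l, forall eps : R, 0 < eps -> exists N, forall n, (N <= n)%N ->
        v (u n - l) <= eps.

(* K contains Q_p: K has characteristic 0 and the restriction of |.| to the
   prime field Q is the p-adic absolute value (for a non-Archimedean absolute
   value on Q this is equivalent to |p| < 1, by Ostrowski); together with
   completeness of K this means K contains (a copy of) Q_p. *)
Definition contains_Qp (R : realType) (K : fieldType) (v : K -> R) (p : nat) : Prop :=
  [/\ prime p, [pchar K] =i pred0 & v (p%:R) < 1].

Definition covering_ring (X : Type) (Rg : set (set X)) : Prop :=
  [/\ forall A B, Rg A -> Rg B -> Rg (A `|` B),
      forall A B, Rg A -> Rg B -> Rg (A `&` B),
      forall A B, Rg A -> Rg B -> Rg (A `\` B) &
      \bigcup_(A in Rg) A = setT].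

Definition tau_open (X : Type) (Rg : set (set X)) (U : set X) : Prop :=
  forall x, U x -> exists B, [/\ Rg B, B x & B `<=` U].

Definition tau_hausdorff (X : Type) (Rg : set (set X)) : Prop :=
  forall x y : X, x <> y ->
    exists U V, [/\ tau_open Rg U, tau_open Rg V, U x, V y & U `&` V = set0].

Definition shrinking (X : Type) (S : set (set X)) : Prop :=
  forall A B, S A -> S B -> exists C, S C /\ C `<=` A `&` B.

Definition sub_vals (R : realType) (K : fieldType) (v : K -> R) (X : Type)
  (Rg : set (set X)) (mu : set X -> K) (A : set X) : set R :=
  [set v (mu B) | B in [set B | Rg B /\ B `<=` A]].

Definition mnorm (R : realType) (K : fieldType) (v : K -> R) (X : Type)
  (Rg : set (set X)) (mu : set X -> K) (A : set X) : R :=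
  sup (sub_vals v Rg mu A).

Definition is_measure (R : realType) (K : fieldType) (v : K -> R) (X : Type)
  (Rg : set (set X)) (mu : set X -> K) : Prop :=
  [/\ forall A B, Rg A -> Rg B -> A `&` B = set0 -> mu (A `|` B) = mu A + mu B,
      forall A, Rg A -> has_ubound (sub_vals v Rg mu A) &
      forall S : set (set X), S `<=` Rg -> shrinking S -> \bigcap_(A in S) A = set0 ->
        forall eps : R, 0 < eps ->
          exists2 B, S B & forall A, S A -> A `<=` B -> v (mu A) <= eps].

Definition is_prob_measure (R : realType) (K : fieldType) (v : K -> R) (X : Type)
  (Rg : set (set X)) (mu : set X -> K) : Prop :=
  [/\ is_measure v Rg mu, Rg setT, mu setT = 1 & mnorm v Rg mu setT = 1].

Definition Nmu (R : realType) (K : fieldType) (v : K -> R) (X : Type)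
  (Rg : set (set X)) (mu : set X -> K) (x : X) : R :=
  inf [set mnorm v Rg mu U | U in [set U | Rg U /\ U x]].

Definition indic_K (K : fieldType) (X : Type) (A : set X) (x : X) : K :=
  if asbool (A x) then 1 else 0.
Arguments indic_K {K X} A x.

Definition step_fun (K : fieldType) (X : Type) (Rg : set (set X)) (f : X -> K) : Prop :=
  exists (n : nat) (c : 'I_n -> K) (B : 'I_n -> set X),
    (forall i, Rg (B i)) /\ f = fun x => \sum_(i < n) c i * indic_K (B i) x.

Definition integrable (R : realType) (K : fieldType) (v : K -> R) (X : Type)
  (Rg : set (set X)) (mu : set X -> K) (f : X -> K) : Prop :=
  exists fn : nat -> X -> K, (forall n, step_fun Rg (fn n)) /\
    forall eps : R, 0 < eps -> exists N, forall n, (N <= n)%N ->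
      forall x, v (f x - fn n x) * Nmu v Rg mu x <= eps.

Definition completion (R : realType) (K : fieldType) (v : K -> R) (X : Type)
  (Rg : set (set X)) (mu : set X -> K) : set (set X) :=
  [set A | integrable v Rg mu (indic_K A)].

Definition box (L : Type) (Xs : L -> Type) (J : seq L) (A : forall j, set (Xs j))
  : set (forall j, Xs j) :=
  [set x | forall j, Stdlib.Lists.List.In j J -> A j (x j)].

Definition cyl_ring (L : Type) (Xs : L -> Type) (Rj : forall j, set (set (Xs j)))
  : set (set (forall j, Xs j)) :=
  [set C | exists (n : nat) (J : nat -> seq L) (A : nat -> forall j, set (Xs j)),
     (forall i, (i < n)%N -> forall j, Stdlib.Lists.List.In j (J i) -> Rj j (A i j)) /\
     C = [set x | exists2 i, (i < n)%N & box (J i) (A i) x]].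

Definition cylindrical_distribution (K : fieldType) (L : Type) (Xs : L -> Type)
  (Rj : forall j, set (set (Xs j))) (muj : forall j, set (Xs j) -> K)
  (mu : set (forall j, Xs j) -> K) : Prop :=
  (forall A B, cyl_ring Rj A -> cyl_ring Rj B -> A `&` B = set0 ->
     mu (A `|` B) = mu A + mu B) /\
  (forall (J : seq L) (A : forall j, set (Xs j)), Stdlib.Lists.List.NoDup J ->
     (forall j, Stdlib.Lists.List.In j J -> Rj j (A j)) ->
     mu (box J A) = \prod_(j <- J) muj j (A j)).

(* Main.v *)
Require Import Defs.
From mathcomp Require Import all_boot all_order all_algebra.
From mathcomp Require Import boolp classical_sets reals.
From mathcomp Require Import filter.
From mathcomp Require Import ring lra.
Set Implicit Arguments. Unset Strict Implicit. Unset Printing Implicit Defensive.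
Import Order.TTheory GRing.Theory Num.Theory.
Local Open Scope classical_set_scope.
Local Open Scope ring_scope.
Section AbsLemmas.
Variables (R : realType) (K : fieldType) (v : K -> R).
Hypothesis Hv : nonarch_abs v.

Lemma v_ge0 x : 0 <= v x. Proof. by case: Hv. Qed.
Lemma v0 : v 0 = 0. Proof. by case: Hv => _ H _ _; apply/H. Qed.
Lemma v1 : v 1 = 1.
Proof.
case: Hv => h0 h1 hM _.
have n0 : v 1 != 0 by apply/eqP => /h1 /eqP; rewrite oner_eq0.
have := hM 1 1; rewrite mulr1 => /(congr1 (fun t => t / v 1)).
by rewrite divff // mulfK.
Qed.
Lemma vM x y : v (x * y) = v x * v y. Proof. by case: Hv. Qed.
Lemma vN x : v (- x) = v x.
Proof.
have h : v (-1) * v (-1) = 1 by rewrite -vM mulrNN mulr1 v1.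
have hp : v (-1) = 1.
  have := v_ge0 (-1); move: h; set a := v (-1) => h ha.
  have /eqP : a ^+ 2 = 1 by rewrite expr2.
  rewrite sqrf_eq1 => /orP [/eqP //|/eqP ha1].
  by move: ha; rewrite ha1 ler0N1.
by rewrite -mulN1r vM hp mul1r.
Qed.
Lemma vD x y : v (x + y) <= Num.max (v x) (v y). Proof. by case: Hv. Qed.
Lemma vD_le x y e : v x <= e -> v y <= e -> v (x + y) <= e.
Proof. by move=> a b; apply: le_trans (vD x y) _; rewrite ge_max a b. Qed.
Lemma vD_lt x y e : v x < e -> v y < e -> v (x + y) < e.
Proof. by move=> a b; apply: le_lt_trans (vD x y) _; rewrite gt_max a b. Qed.
Lemma vB_le x y e : v x <= e -> v y <= e -> v (x - y) <= e.
Proof. by move=> a b; apply: vD_le => //; rewrite vN. Qed.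
Lemma vBC x y : v (x - y) = v (y - x).
Proof. by rewrite -vN opprB. Qed.
Lemma v_eq0 x : v x = 0 -> x = 0. Proof. by move=> h; case: Hv => _ H _ _; exact: (proj1 (H x) h). Qed.
Lemma v_gt_split3 a b c e : e < v (a + b - c) -> e < v a \/ e < v b \/ e < v c.
Proof.
move=> h; case: (ltP e (v a)) => ha; first by left.
case: (ltP e (v b)) => hb; first by right; left.
case: (ltP e (v c)) => hc; first by right; right.
by move: h; rewrite ltNge (vB_le (vD_le ha hb) hc).
Qed.
Lemma v_big_prod (I : Type) (s : seq I) (f : I -> K) :
  v (\prod_(i <- s) f i) = \prod_(i <- s) v (f i).
Proof.
elim: s => [|a s IH]; first by rewrite !big_nil v1.
by rewrite !big_cons vM IH.
Qed.
End AbsLemmas.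

Lemma prod_01 (R : realType) (I : Type) (s : seq I) (f : I -> R) :
  (forall i, List.In i s -> 0 <= f i <= 1) -> 0 <= \prod_(i <- s) f i <= 1.
Proof.
elim: s => [|b s' IH'] hf; first by rewrite big_nil ler01 lexx.
rewrite big_cons; have /andP[b0 b1] := hf b (or_introl erefl).
have /andP [p0 p1] : 0 <= \prod_(j <- s') f j <= 1.
  by apply: IH' => k hk; apply: hf; right.
by rewrite mulr_ge0 // mulr_ile1.
Qed.

Lemma prod_le1_gt (R : realType) (I : Type) (s : seq I) (f : I -> R) e :
  (forall i, List.In i s -> 0 <= f i <= 1) -> e < \prod_(i <- s) f i ->
  forall i, List.In i s -> e < f i.
Proof.
elim: s => [|a s IH] //= hf; rewrite big_cons => hlt i [<-|hi].
- have /andP [h0 h1] := hf a (or_introl erefl).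
  have /andP [p0 p1] := prod_01 (fun k hk => hf k (or_intror hk)).
  by apply: lt_le_trans hlt _; rewrite ler_piMr.
- apply: IH hi => //; first by move=> k hk; apply: hf; right.
  have /andP [h0 h1] := hf a (or_introl erefl).
  have /andP [p0 p1] := prod_01 (fun k hk => hf k (or_intror hk)).
  by apply: lt_le_trans hlt _; rewrite ler_piMl.
Qed.
Definition ultra_sys (T : Type) (U : set (set T)) : Prop :=
  [/\ ~ U set0, (forall A B, A `<=` B -> U A -> U B),
      (forall A B, U A -> U B -> U (A `&` B)) & (forall A, U A \/ U (~` A))].

Lemma ultra_notU T (U : set (set T)) A B : ultra_sys U -> ~ U A -> ~ U B -> ~ U (A `|` B).
Proof.
case=> h0 hS hI hC nA nB hAB.
case: (hC A) => // hA'; case: (hC B) => // hB'.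
apply: h0; apply: hS (hI _ _ hAB (hI _ _ hA' hB')).
by move=> x [[ax|bx] [na nb]].
Qed.

Lemma ultra_compl T (U : set (set T)) A : ultra_sys U -> ~ U A -> U (~` A).
Proof. by case=> _ _ _ hC nA; case: (hC A). Qed.

Lemma ultra_meet T (U : set (set T)) A : ultra_sys U -> U A -> exists x, A x.
Proof.
case=> h0 hS _ _ hA; apply: contrapT => hn; apply: h0; apply: hS hA.
by move=> x ax; apply: hn; exists x.
Qed.

Lemma ultra_of_base T (S : set (set T)) :
  (exists A, S A) -> (forall A B, S A -> S B -> exists C, S C /\ C `<=` A `&` B) ->
  (forall A, S A -> exists x, A x) ->
  exists U, ultra_sys U /\ S `<=` U.
Proof.
move=> [A0 SA0] hsh hne.
have FF : Filter (filter_from S id).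
  apply: filter_from_filter; first by exists A0.
  by move=> A B sA sB; have [C [sC hC]] := hsh A B sA sB; exists C.
have PF : ProperFilter (filter_from S id).
  by apply: filter_from_proper => A sA; have [x ax] := hne A sA; exists x.
have [G [GU sub]] := ultraFilterLemma PF.
exists G; split; last by move=> A sA; apply: sub; exists A.
split.
- exact: (@filter_not_empty _ G _).
- by move=> A B sAB hA; apply: filterS sAB hA.
- by move=> A B hA hB; apply: filterI.
- by move=> A; apply: in_ultra_setVsetC.
Qed.

Section MeasSpace.
Variables (R : realType) (K : fieldType) (v : K -> R).
Hypothesis Hv : nonarch_abs v.
Variables (T : Type) (Rg : set (set T)) (m : set T -> K).
Hypothesis HR : covering_ring Rg.
Hypothesis HT : Rg setT.
Hypothesis Hadd : forall A B, Rg A -> Rg B -> A `&` B = set0 -> m (A `|` B) = m A + m B.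

Lemma RgU A B : Rg A -> Rg B -> Rg (A `|` B). Proof. by move=> hA hB; case: HR => h _ _ _; apply: h. Qed.
Lemma RgI A B : Rg A -> Rg B -> Rg (A `&` B). Proof. by move=> hA hB; case: HR => _ h _ _; apply: h. Qed.
Lemma RgD A B : Rg A -> Rg B -> Rg (A `\` B). Proof. by move=> hA hB; case: HR => _ _ h _; apply: h. Qed.
Lemma Rg0 : Rg set0. Proof. by rewrite -(setDv setT); apply: RgD. Qed.
Lemma RgC A : Rg A -> Rg (~` A). Proof. by move=> hA; rewrite -setTD; apply: RgD. Qed.

Lemma m0 : m set0 = 0.
Proof.
have h := Hadd Rg0 Rg0 (setI0 set0); rewrite setU0 in h.
have : m set0 + m set0 - m set0 = 0 by rewrite -h subrr.
by rewrite addrK.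
Qed.

Lemma m_split A B : Rg A -> Rg B -> m A = m (A `&` B) + m (A `\` B).
Proof.
move=> hA hB; rewrite -Hadd; first by rewrite setUIDK.
- exact: RgI.
- exact: RgD.
- by rewrite setDE setIACA setICr setI0.
Qed.

Lemma m_union A B : Rg A -> Rg B -> m (A `|` B) = m A + m B - m (A `&` B).
Proof.
move=> hA hB; have hU := RgU hA hB.
rewrite (m_split hU hA) setUK (m_split hB hA).
have -> : (A `|` B) `\` A = B `\` A by rewrite setDUl setDv set0U.
by rewrite setIC; ring.
Qed.

Definition heavy (e : R) (y : T) :=
  forall V, Rg V -> V y -> exists A, [/\ Rg A, A `<=` V & e < v (m A)].

Definition good (e : R) (V : set T) :=
  Rg V /\ forall A, Rg A -> A `<=` V -> v (m A) <= e.

Lemma goodU e V W : good e V -> good e W -> good e (V `|` W).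
Proof.
move=> [hV gV] [hW gW]; split; first exact: RgU.
move=> A hA sA; rewrite (m_split hA hV); apply: vD_le => //.
  by apply: gV; [exact: RgI| move=> x []].
apply: gW; first exact: RgD.
by move=> x [/sA [] // ].
Qed.

Lemma not_heavy_good e y : ~ heavy e y -> exists V, good e V /\ V y.
Proof.
move=> nh; apply: contrapT => hn; apply: nh => V hV Vy.
apply: contrapT => hA; apply: hn; exists V; split => //; split => // A hA' sA.
rewrite leNgt; apply/negP => hlt; apply: hA; exists A; split => //.
Qed.

Hypothesis Hmeas : forall S : set (set T), S `<=` Rg -> shrinking S -> \bigcap_(A in S) A = set0 ->
        forall eps : R, 0 < eps ->
          exists2 B, S B & forall A, S A -> A `<=` B -> v (m A) <= eps.

Lemma heavy_exists D e : 0 < e -> Rg D -> e < v (m D) -> exists y, D y /\ heavy e y.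
Proof.
move=> e0 hD hlt; apply: contrapT => hno.
have hg : forall y, D y -> exists V, good e V /\ V y.
  move=> y Dy; apply: not_heavy_good => hy; apply: hno; exists y; split => //.
pose S := [set D `\` V | V in good e].
have SR : S `<=` Rg by move=> _ [V [hV _] <-]; apply: RgD.
have Ssh : shrinking S.
  move=> _ _ [V gV <-] [W gW <-]; exists (D `\` (V `|` W)); split.
    by exists (V `|` W) => //; apply: goodU.
  by rewrite setDUr.
have Scap : \bigcap_(A in S) A = set0.
  apply/seteqP; split => // y hy; have [Dy|nDy] := pselect (D y).
    have [V [gV Vy]] := hg y Dy.
    by have [] := hy (D `\` V) (ex_intro2 _ _ V gV erefl).
  have g0 : good e set0.
    split; first exact: Rg0.
    move=> A _ sA; have -> : A = set0 by apply/seteqP; split => // x /sA.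
    by rewrite m0 (v0 Hv) ltW.
  by have [] := hy (D `\` set0) (ex_intro2 _ _ set0 g0 erefl).
have [_ [V0 gV0 <-] hB] := Hmeas SR Ssh Scap e0.
have h1 : v (m (D `\` V0)) <= e by apply: hB => //; exists V0.
have h2 : v (m (D `&` V0)) <= e.
  by case: gV0 => hV0 gV0; apply: gV0; [exact: RgI| move=> x []].
by move: hlt; rewrite ltNge (m_split hD (proj1 gV0)) (vD_le Hv h2 h1).
Qed.

Lemma ultra_compact e (U : set (set T)) : 0 < e -> ultra_sys U -> U (heavy e) ->
  exists y, forall V, Rg V -> V y -> U V.
Proof.
move=> e0 hU hK; have [hU0 hUS hUI hUC] := hU; apply: contrapT => hno.
have hy : forall y, exists V, [/\ Rg V, V y & ~ U V].
  move=> y; apply: contrapT => hn; apply: hno; exists y => V hV Vy.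
  by apply: contrapT => nU; apply: hn; exists V.
pose S := [set ~` A | A in [set A | Rg A /\ ~ U A]].
have SR : S `<=` Rg by move=> _ [A [hA _] <-]; apply: RgC.
have Ssh : shrinking S.
  move=> _ _ [A [hA nA] <-] [B [hB nB] <-]; exists (~` (A `|` B)); split.
    by exists (A `|` B) => //; split; [exact: RgU| exact: ultra_notU].
  by rewrite setCU.
have Scap : \bigcap_(A in S) A = set0.
  apply/seteqP; split => // y hyc; have [V [hV Vy nV]] := hy y.
  by have := hyc (~` V) (ex_intro2 _ _ V (conj hV nV) erefl).
have [_ [A0 [hA0 nA0] <-] hB] := Hmeas SR Ssh Scap e0.
have UA0 : U (~` A0) by apply: ultra_compl.
have [y [Ky Cy]] : exists y, heavy e y /\ (~` A0) y.
  by have [y [Ky Cy]] := ultra_meet hU (hUI _ _ hK UA0); exists y.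
have [V [hV Vy nV]] := hy y.
have [C [hC sC hlt]] := Ky (V `&` ~` A0) (RgI hV (RgC hA0)) (conj Vy Cy).
have nC : ~ U C by move=> uC; apply: nV; apply: hUS uC => x /sC [].
have h1 : v (m (~` A0 `\` C)) <= e.
  apply: hB; last by move=> x [].
  by exists (A0 `|` C); [split; [exact: RgU|exact: ultra_notU] | rewrite setCU setDE].
have h2 : v (m (~` A0)) <= e by apply: hB => //; exists A0.
have hsplit := m_split (RgC hA0) hC.
have eC : (~` A0) `&` C = C.
  by apply/seteqP; split => x; [case| move=> cx; split => //; case: (sC x cx)].
rewrite eC in hsplit.
have : m C = m (~` A0) - m (~` A0 `\` C) by rewrite hsplit; ring.
by move=> hc; move: hlt; rewrite hc ltNge (vB_le Hv h2 h1).
Qed.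

End MeasSpace.
Section Cyl.
Local Unset Implicit Arguments.
Variables (L : Type) (Xs : L -> Type) (Rj : forall j, set (set (Xs j))).
Hypothesis HRj : forall j : L, covering_ring (Rj j).
Hypothesis HTj : forall j : L, Rj j setT.
Local Set Implicit Arguments.

Local Notation X := (forall j, Xs j).

Definition bfam (J : seq L) (A : forall j, set (Xs j)) :=
  forall j, List.In j J -> Rj j (A j).
Definition ufam n (J : nat -> seq L) (A : nat -> forall j, set (Xs j)) :=
  forall i, (i < n)%N -> bfam (J i) (A i).
Definition ucyl n (J : nat -> seq L) (A : nat -> forall j, set (Xs j)) : set X :=
  [set x | exists2 i, (i < n)%N & box (J i) (A i) x].

Lemma cyl_ringE (C : set X) : cyl_ring Rj C <-> exists n J A, ufam n J A /\ C = ucyl n J A.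
Proof. by []. Qed.

Definition bI (J1 : seq L) (A1 : forall j, set (Xs j)) (J2 : seq L) (A2 : forall j, set (Xs j)) :
  forall j, set (Xs j) := fun j =>
  (if asbool (List.In j J1) then A1 j else setT) `&` (if asbool (List.In j J2) then A2 j else setT).

Lemma boxI (J1 : seq L) (A1 : forall j, set (Xs j)) (J2 : seq L) (A2 : forall j, set (Xs j)) : box J1 A1 `&` box J2 A2 = box (J1 ++ J2) (bI J1 A1 J2 A2).
Proof.
apply/seteqP; split => x.
- move=> [h1 h2] j /List.in_app_iff hj; rewrite /bI; split.
    by case: asboolP => // /h1.
  by case: asboolP => // /h2.
- move=> h; split => j hj.
    by have := h j (List.in_or_app _ _ _ (or_introl hj)); rewrite /bI (asboolT hj) => -[].
  by have := h j (List.in_or_app _ _ _ (or_intror hj)); rewrite /bI (asboolT hj) => -[].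
Qed.

Lemma bfam_bI (J1 : seq L) (A1 : forall j, set (Xs j)) (J2 : seq L) (A2 : forall j, set (Xs j)) : bfam J1 A1 -> bfam J2 A2 -> bfam (J1 ++ J2) (bI J1 A1 J2 A2).
Proof.
move=> h1 h2 j _; rewrite /bI; apply: (RgI (HRj j)).
  by case: asboolP => // /h1.
by case: asboolP => // /h2.
Qed.

Lemma box_nil (A : forall j, set (Xs j)) : box [::] A = setT.
Proof. by apply/seteqP; split => x // _ j []. Qed.

Lemma box_cons (j : L) (J : seq L) (A : forall j, set (Xs j)) : box (j :: J) A = [set x | A j (x j)] `&` box J A.
Proof.
apply/seteqP; split => x.
  by move=> h; split; [apply: h; left| move=> k hk; apply: h; right].
by move=> [h1 h2] k [<-|hk] //; apply: h2.
Qed.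

Lemma ucyl0 (J : nat -> seq L) (A : nat -> forall j, set (Xs j)) : ucyl 0 J A = set0.
Proof. by apply/seteqP; split => x // [i]. Qed.

Lemma ucylS n (J : nat -> seq L) (A : nat -> forall j, set (Xs j)) : ucyl n.+1 J A = ucyl n J A `|` box (J n) (A n).
Proof.
apply/seteqP; split => x.
  move=> [i]; rewrite ltnS leq_eqVlt => /orP [/eqP ->|hi] hb; first by right.
  by left; exists i.
by move=> [[i hi hb]|hb]; [exists i => //; apply: ltnW | exists n].
Qed.

Lemma ufamS n (J : nat -> seq L) (A : nat -> forall j, set (Xs j)) : ufam n.+1 J A -> ufam n J A /\ bfam (J n) (A n).
Proof. by move=> h; split; [move=> i hi; apply: h; apply: ltnW| apply: h]. Qed.

Lemma cyl_ucyl n (J : nat -> seq L) (A : nat -> forall j, set (Xs j)) : ufam n J A -> cyl_ring Rj (ucyl n J A).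
Proof. by move=> h; apply/cyl_ringE; exists n, J, A. Qed.

Lemma cyl_box (J : seq L) (A : forall j, set (Xs j)) : bfam J A -> cyl_ring Rj (box J A).
Proof.
move=> h; apply/cyl_ringE; exists 1%N, (fun=> J), (fun=> A); split; first by move=> i _.
by apply/seteqP; split => x; [move=> hx; exists 0%N| case].
Qed.

Lemma cyl0 : cyl_ring Rj set0.
Proof. by apply/cyl_ringE; exists 0%N, (fun=> [::]), (fun _ j => setT); split => //; rewrite ucyl0. Qed.

Lemma cylT : cyl_ring Rj setT.
Proof. by rewrite -(box_nil (fun j => setT)); apply: cyl_box => j []. Qed.

Lemma cylU (C D : set X) : cyl_ring Rj C -> cyl_ring Rj D -> cyl_ring Rj (C `|` D).
Proof.
move=> /cyl_ringE [n [J [A [hA ->]]]] /cyl_ringE [m [J' [A' [hA' ->]]]]; apply/cyl_ringE.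
exists (n + m)%N, (fun i => if (i < n)%N then J i else J' (i - n)%N),
  (fun i => if (i < n)%N then A i else A' (i - n)%N); split.
  move=> i hi; case: ifP => hin; first exact: hA.
  by apply: hA'; rewrite ltn_subLR // leqNgt hin.
apply/seteqP; split => x.
- move=> [[i hi hb]|[i hi hb]].
    by exists i; [rewrite ltn_addr| rewrite hi].
  exists (n + i)%N; first by rewrite ltn_add2l.
  by rewrite ltnNge leq_addr /= addKn.
- move=> [i hi]; case: ifP => hin hb; first by left; exists i.
  by right; exists (i - n)%N => //; rewrite ltn_subLR // leqNgt hin.
Qed.

Lemma box_ucylI (J0 : seq L) (A0 : forall j, set (Xs j)) m (J : nat -> seq L) (A : nat -> forall j, set (Xs j)) :
  box J0 A0 `&` ucyl m J A = ucyl m (fun i => J0 ++ J i) (fun i => bI J0 A0 (J i) (A i)).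
Proof.
apply/seteqP; split => x.
  by move=> [h0 [i hi hb]]; exists i => //; rewrite -boxI.
by move=> [i hi]; rewrite -boxI => -[h0 hb]; split => //; exists i.
Qed.

Lemma cyl_boxI (J0 : seq L) (A0 : forall j, set (Xs j)) (C : set X) : bfam J0 A0 -> cyl_ring Rj C -> cyl_ring Rj (box J0 A0 `&` C).
Proof.
move=> h0 /cyl_ringE [m [J [A [hA ->]]]]; rewrite box_ucylI; apply: cyl_ucyl.
by move=> i hi; apply: bfam_bI => //; apply: hA.
Qed.

Lemma cylI (C D : set X) : cyl_ring Rj C -> cyl_ring Rj D -> cyl_ring Rj (C `&` D).
Proof.
move=> /cyl_ringE [n [J [A [hA ->]]]] hD; elim: n hA => [|n IH] hA.
  by rewrite ucyl0 set0I; exact: cyl0.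
have [hA1 hb] := ufamS hA.
rewrite ucylS setIUl; apply: cylU; first exact: IH.
exact: cyl_boxI.
Qed.

Lemma cyl_boxC (J : seq L) (A : forall j, set (Xs j)) : bfam J A -> cyl_ring Rj (~` box J A).
Proof.
elim: J => [|j J IH] h.
  by rewrite box_nil setCT; exact: cyl0.
rewrite box_cons setCI; apply: cylU; last by apply: IH => k hk; apply: h; right.
have -> : ~` [set x : X | A j (x j)] = box [:: j] (fun k => ~` A k).
  apply/seteqP; split => x; first by move=> hx k [<-|[]].
  by move=> hx; apply: (hx j); left.
apply: cyl_box => k hk; case: hk => [hk|[]]; subst k.
apply: RgC; [exact: HRj|exact: HTj|apply: h; left; done].
Qed.

Lemma cylC (C : set X) : cyl_ring Rj C -> cyl_ring Rj (~` C).
Proof.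
move=> /cyl_ringE [n [J [A [hA ->]]]]; elim: n hA => [|n IH] hA.
  by rewrite ucyl0 setC0; exact: cylT.
have [hA1 hb] := ufamS hA.
by rewrite ucylS setCU; apply: cylI; [exact: IH| exact: cyl_boxC].
Qed.

Lemma cylD (C D : set X) : cyl_ring Rj C -> cyl_ring Rj D -> cyl_ring Rj (C `\` D).
Proof. by move=> hC hD; rewrite setDE; apply: cylI => //; apply: cylC. Qed.

Lemma cyl_covering : covering_ring (cyl_ring Rj).
Proof.
split; [exact: cylU| exact: cylI| exact: cylD|].
by apply/seteqP; split => x // _; exists setT => //; exact: cylT.
Qed.

End Cyl.
Section ProdMeas.
Local Unset Implicit Arguments.
Variables (R : realType) (K : fieldType) (v : K -> R).
Hypothesis Hv : nonarch_abs v.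
Variables (L : Type) (Xs : L -> Type) (Rj : forall j, set (set (Xs j))).
Variables (muj : forall j, set (Xs j) -> K) (mu : set (forall j, Xs j) -> K).
Hypothesis HRj : forall j : L, covering_ring (Rj j).
Hypothesis HTj : forall j : L, Rj j setT.
Hypothesis Hmu : cylindrical_distribution Rj muj mu.
Hypothesis Hmuj1 : forall (j : L) A, Rj j A -> v (muj j A) <= 1.
Local Set Implicit Arguments.

Local Notation X := (forall j, Xs j).

Definition Ldec (x y : L) : {x = y} + {x <> y} := pselect (x = y).

Lemma box_nodup (J : seq L) (A : forall j, set (Xs j)) : box J A = box (List.nodup Ldec J) A.
Proof.
apply/seteqP; split => x h j hj; apply: h.
  by apply/(List.nodup_In Ldec).
by apply/(List.nodup_In Ldec).
Qed.

Lemma mu_box (J : seq L) (A : forall j, set (Xs j)) : bfam Rj J A ->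
  mu (box J A) = \prod_(j <- List.nodup Ldec J) muj j (A j).
Proof.
move=> h; rewrite box_nodup; apply: (proj2 Hmu); first exact: List.NoDup_nodup.
by move=> j /(List.nodup_In Ldec) /h.
Qed.

Lemma vmu_box (J : seq L) (A : forall j, set (Xs j)) : bfam Rj J A ->
  0 <= v (mu (box J A)) <= 1.
Proof.
move=> h; rewrite mu_box // (v_big_prod Hv); apply: prod_01 => j /(List.nodup_In Ldec) hj.
by rewrite v_ge0 // Hmuj1 //; apply: h.
Qed.

Lemma vmu_box_gt (J : seq L) (A : forall j, set (Xs j)) e : bfam Rj J A ->
  e < v (mu (box J A)) -> forall j, List.In j J -> e < v (muj j (A j)).
Proof.
move=> h; rewrite mu_box // (v_big_prod Hv) => hlt j hj.
apply: (prod_le1_gt _ hlt); last by apply/(List.nodup_In Ldec).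
move=> k /(List.nodup_In Ldec) hk.
by rewrite v_ge0 // Hmuj1 //; apply: h.
Qed.

Lemma mu_add (A B : set X) : cyl_ring Rj A -> cyl_ring Rj B -> A `&` B = set0 ->
  mu (A `|` B) = mu A + mu B.
Proof. exact: (proj1 Hmu). Qed.

Lemma cyl_cov : covering_ring (cyl_ring Rj). Proof. exact: cyl_covering. Qed.
Lemma cylT' : cyl_ring Rj setT. Proof. exact: cylT. Qed.

Lemma mu0 : mu set0 = 0.
Proof. exact: (m0 cyl_cov cylT' mu_add). Qed.

Lemma mu_union (A B : set X) : cyl_ring Rj A -> cyl_ring Rj B ->
  mu (A `|` B) = mu A + mu B - mu (A `&` B).
Proof. exact: (m_union cyl_cov mu_add). Qed.

Lemma ucyl_heavy_box e : 0 <= e -> forall n (J : nat -> seq L) (A : nat -> forall j, set (Xs j)),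
  ufam Rj n J A -> e < v (mu (ucyl n J A)) ->
  exists (J' : seq L) (A' : forall j, set (Xs j)),
    [/\ bfam Rj J' A', box J' A' `<=` ucyl n J A & e < v (mu (box J' A'))].
Proof.
move=> e0; elim => [|n IH] J A hA.
  by rewrite ucyl0 mu0 (v0 Hv) ltNge e0.
have [hA1 hb] := ufamS hA.
have cD := cyl_ucyl hA1; have cb := cyl_box hb.
rewrite ucylS (mu_union cD cb) => /(v_gt_split3 Hv) [h|[h|h]].
- have [J' [A' [h1 h2 h3]]] := IH J A hA1 h.
  by exists J', A'; split => //; apply: subset_trans h2 _; apply: subsetUl.
- by exists (J n), (A n); split => //; apply: subsetUr.
- move: h; rewrite setIC box_ucylI => h.
  have hf : ufam Rj n (fun i => J n ++ J i) (fun i => bI (J n) (A n) (J i) (A i)).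
    by move=> i hi; apply: bfam_bI => //; apply: hA1.
  have [J' [A' [h1 h2 h3]]] := IH _ _ hf h.
  exists J', A'; split => //; apply: subset_trans h2 _.
  by rewrite -box_ucylI setIC => x [hx _]; left.
Qed.

Lemma cyl_le1 (C : set X) : cyl_ring Rj C -> v (mu C) <= 1.
Proof.
move=> /cyl_ringE [n [J [A [hA ->]]]]; rewrite leNgt; apply/negP => h.
have [J' [A' [h1 _ h3]]] := ucyl_heavy_box ler01 hA h.
by have /andP [_ ] := vmu_box h1; rewrite leNgt h3.
Qed.

End ProdMeas.
Section ProdMeas2.
Local Unset Implicit Arguments.
Variables (R : realType) (K : fieldType) (v : K -> R).
Hypothesis Hv : nonarch_abs v.
Variables (L : Type) (Xs : L -> Type) (Rj : forall j, set (set (Xs j))).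
Variables (muj : forall j, set (Xs j) -> K) (mu : set (forall j, Xs j) -> K).
Hypothesis HRj : forall j : L, covering_ring (Rj j).
Hypothesis Hmuj : forall j : L, is_prob_measure v (Rj j) (muj j).
Hypothesis Hmu : cylindrical_distribution Rj muj mu.
Local Set Implicit Arguments.

Local Notation X := (forall j, Xs j).

Lemma HTj j : Rj j setT. Proof. by case: (Hmuj j). Qed.
Lemma Haddj j : forall A B, Rj j A -> Rj j B -> A `&` B = set0 ->
  muj j (A `|` B) = muj j A + muj j B.
Proof. by case: (Hmuj j) => -[]. Qed.
Lemma Hmeasj j : forall S : set (set (Xs j)), S `<=` Rj j -> shrinking S -> \bigcap_(A in S) A = set0 ->
        forall eps : R, 0 < eps ->
          exists2 B, S B & forall A, S A -> A `<=` B -> v (muj j A) <= eps.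
Proof. by case: (Hmuj j) => -[]. Qed.
Lemma Hmuj1 j A : Rj j A -> v (muj j A) <= 1.
Proof.
move=> hA; case: (Hmuj j) => -[_ hb _] hT _ <-.
by apply: ub_le_sup; [exact: hb| exists A].
Qed.
Lemma mujT j : muj j setT = 1. Proof. by case: (Hmuj j). Qed.

Definition Kj (e : R) (j : L) : set (Xs j) := heavy v (Rj j) (muj j) e.
Arguments Kj : clear implicits.
Definition Hco (e : R) : set X := [set x | forall j, Kj e j (x j)].

Lemma Kj_point e : 0 < e < 1 -> forall j, exists y, Kj e j y.
Proof.
move=> /andP [e0 e1] j.
have h1 : e < v (muj j setT) by rewrite mujT (v1 Hv).
have [y [_ hy]] := heavy_exists Hv (HRj j) (HTj j) (@Haddj j) (@Hmeasj j) e0 (HTj j) h1.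
by exists y.
Qed.

Lemma box_point e (J : seq L) (A : forall j, set (Xs j)) : 0 < e < 1 -> bfam Rj J A ->
  e < v (mu (box J A)) -> exists x, box J A x /\ Hco e x.
Proof.
move=> he hb hlt.
have e0 : 0 < e by case/andP: he.
have hJ : forall j, List.In j J -> exists y, A j y /\ Kj e j y.
  move=> j hj; apply: (heavy_exists Hv (HRj j) (HTj j) (@Haddj j) (@Hmeasj j) e0 (hb j hj)).
  exact: (vmu_box_gt Hv Hmu Hmuj1 hb hlt hj).
pose x : X := fun j => match pselect (List.In j J) with
  | left h => proj1_sig (cid (hJ j h))
  | right _ => proj1_sig (cid (Kj_point he j)) end.
exists x; split.
  move=> j hj; rewrite /x; case: pselect => h; last by [].
  by case: cid => y [].
move=> j; rewrite /x; case: pselect => h.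
  by case: cid => y [].
by case: cid.
Qed.

Lemma cyl_point e (C : set X) : 0 < e < 1 -> cyl_ring Rj C ->
  e < v (mu C) -> exists x, C x /\ Hco e x.
Proof.
move=> he /cyl_ringE [n [J [A [hA ->]]]] hlt.
have e0 : 0 <= e by case/andP: he => /ltW.
have [J' [A' [h1 h2 h3]]] := ucyl_heavy_box Hv HRj HTj Hmu e0 hA hlt.
have [x [hx hH]] := box_point he h1 h3.
by exists x; split => //; apply: h2.
Qed.

Lemma ultra_proj (U : set (set X)) j : ultra_sys U ->
  ultra_sys [set V : set (Xs j) | U [set x | V (x j)]].
Proof.
case=> h0 hS hI hC; split => /=.
- by move=> h; apply: h0; apply: hS h => x.
- by move=> A B sAB; apply: hS => x /sAB.
- by move=> A B hA hB; apply: hS (hI _ _ hA hB) => x.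
- by move=> A; case: (hC [set x : X | A (x j)]) => h; [left|right].
Qed.

Lemma ultraT T (U : set (set T)) : ultra_sys U -> U setT.
Proof.
case=> h0 hS _ hC; case: (hC setT) => // h; exfalso; apply: h0.
by apply: hS h => x /=; apply.
Qed.

Lemma ultra_limit e (U : set (set X)) : 0 < e -> ultra_sys U -> U (Hco e) ->
  exists x : X, forall j V, Rj j V -> V (x j) -> U [set y | V (y j)].
Proof.
move=> e0 hU hH.
have hj : forall j, exists y, forall V, Rj j V -> V y -> U [set x : X | V (x j)].
  move=> j; apply: (ultra_compact Hv (HRj j) (HTj j) (@Haddj j) (@Hmeasj j) e0 (ultra_proj j hU)).
  by case: hU => _ hS _ _; apply: hS hH => x /(_ j).
by exists (fun j => proj1_sig (cid (hj j))) => j V hV hx; case: cid hx => y /= h; apply: h.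
Qed.

Lemma ultra_box (U : set (set X)) (x : X) : ultra_sys U ->
  (forall j V, Rj j V -> V (x j) -> U [set y | V (y j)]) ->
  forall (J : seq L) (A : forall j, set (Xs j)), bfam Rj J A -> box J A x -> U (box J A).
Proof.
move=> hU hx; elim => [|j J IH] A hb hbx; first by rewrite box_nil; apply: ultraT.
rewrite box_cons; case: hU => _ _ hI _; apply: hI.
  by apply: hx; [apply: hb; left| apply: hbx; left].
by apply: IH; [move=> k hk; apply: hb; right| move=> k hk; apply: hbx; right].
Qed.

Lemma ultra_cyl_mem (U : set (set X)) (x : X) (C : set X) : ultra_sys U ->
  (forall j V, Rj j V -> V (x j) -> U [set y | V (y j)]) ->
  cyl_ring Rj C -> U C -> C x.
Proof.
move=> hU hx hC UC; apply: contrapT => nC.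
have := cylC HRj (HTj) hC => /cyl_ringE [m [J [A [hA eC]]]].
have : (~` C) x by [].
rewrite eC => -[i hi hbx].
have Ub := ultra_box hU hx (hA i hi) hbx.
case: hU => h0 hS hI _; apply: h0; apply: hS (hI _ _ Ub UC).
by move=> y [hy1 hy2]; have : (~` C) y by rewrite eC; exists i.
Qed.

Lemma X_point : exists x : X, True.
Proof.
have h1 : (0:R) < (2 : R)^-1 by lra.
have h2 : (2 : R)^-1 < 1 by lra.
have he : (0 : R) < (2 : R)^-1 < 1 by rewrite h1 h2.
by exists (fun j => proj1_sig (cid (Kj_point he j))).
Qed.

Lemma mu_meas : forall S : set (set X), S `<=` cyl_ring Rj -> shrinking S ->
  \bigcap_(A in S) A = set0 -> forall eps : R, 0 < eps ->
  exists2 B, S B & forall A, S A -> A `<=` B -> v (mu A) <= eps.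
Proof.
move=> S SR Ssh Scap eps e0.
have [B0 SB0] : exists B, S B.
  apply: contrapT => hn; have [x0 _] := X_point.
  have : (\bigcap_(A in S) A) x0 by move=> A SA; exfalso; apply: hn; exists A.
  by rewrite Scap.
case: (leP 1 eps) => he1.
  exists B0 => // A SA _; apply: le_trans he1.
  exact: (cyl_le1 Hv HRj HTj Hmu Hmuj1 (SR A SA)).
have he : 0 < eps < 1 by rewrite e0 he1.
apply: contrapT => hno.
have hbig : forall B, S B -> exists A, [/\ S A, A `<=` B & eps < v (mu A)].
  move=> B SB; apply: contrapT => hn; apply: hno; exists B => // A SA sAB.
  by rewrite leNgt; apply/negP => hlt; apply: hn; exists A.
pose S' := [set A `&` Hco eps | A in S].
have [U [hU sU]] : exists U, ultra_sys U /\ S' `<=` U.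
  apply: ultra_of_base.
  - by exists (B0 `&` Hco eps); exists B0.
  - move=> _ _ [A SA <-] [B SB <-]; have [C [SC sC]] := Ssh A B SA SB.
    exists (C `&` Hco eps); split; first by exists C.
    by move=> x [/sC [hA hB] hH].
  - move=> _ [A SA <-]; have [A' [SA' sA' hlt]] := hbig A SA.
    have [x [hx hH]] := cyl_point he (SR A' SA') hlt.
    by exists x; split => //; apply: sA'.
have UH : U (Hco eps).
  by case: hU => _ hS _ _; apply: hS (sU _ (ex_intro2 _ _ B0 SB0 erefl)) => x [].
have [x hx] := ultra_limit e0 hU UH.
have : (\bigcap_(A in S) A) x.
  move=> A SA; apply: (ultra_cyl_mem hU hx (SR A SA)).
  by case: hU => _ hS _ _; apply: hS (sU _ (ex_intro2 _ _ A SA erefl)) => y [].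
by rewrite Scap.
Qed.

End ProdMeas2.
Lemma arch_tol (R : realType) (d : R) : 0 < d ->
  exists N : nat, forall n, (N <= n)%N -> (n.+1%:R : R)^-1 <= d.
Proof.
move=> d0; exists (Num.truncn (d^-1)) => n hn.
have h1 : d^-1 < (n.+1)%:R.
  apply: lt_le_trans (truncnS_gt _) _; rewrite ler_nat ltnS; exact: hn.
have hn0 : (0 : R) < n.+1%:R by rewrite ltr0n.
rewrite -(invrK d) lef_pV2 ?posrE ?invr_gt0 //; exact: ltW.
Qed.

Section Upd.
Local Unset Implicit Arguments.
Variables (L : Type) (Xs : L -> Type).
Definition upd (y : forall j, Xs j) (j : L) (t : Xs j) : forall k, Xs k :=
  fun k => match pselect (j = k) with
           | left e => eq_rect j Xs t k e
           | right _ => y k end.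
Lemma upd_eq y j t : upd y j t j = t.
Proof.
rewrite /upd; case: pselect => // e.
by rewrite (Prop_irrelevance e erefl).
Qed.
Lemma upd_neq y j t k : j <> k -> upd y j t k = y k.
Proof. by rewrite /upd; case: pselect. Qed.
Definition fam1 (j : L) (V : set (Xs j)) : forall k, set (Xs k) :=
  fun k => [set s : Xs k | forall e : k = j, V (eq_rect k Xs s j e)].
Lemma fam1_eq j V : fam1 j V j = V.
Proof.
apply/seteqP; split => s /=; first by move=> /(_ erefl).
by move=> h e; rewrite (Prop_irrelevance e erefl).
Qed.
Lemma box_fam1 j V : box [:: j] (fam1 j V) = [set y | V (y j)].
Proof.
apply/seteqP; split => y /=.
  by move=> /(_ j (or_introl erefl)); rewrite fam1_eq.
by move=> h k [<-|[]]; rewrite fam1_eq.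
Qed.
End Upd.
Arguments upd {L Xs}. Arguments upd_eq {L Xs}. Arguments upd_neq {L Xs}.
Arguments fam1 {L Xs}. Arguments fam1_eq {L Xs}. Arguments box_fam1 {L Xs}.
Section Compl.
Local Unset Implicit Arguments.
Variables (R : realType) (K : fieldType) (v : K -> R).
Hypothesis Hv : nonarch_abs v.
Variables (L : Type) (Xs : L -> Type) (Rj : forall j, set (set (Xs j))).
Variables (muj : forall j, set (Xs j) -> K) (mu : set (forall j, Xs j) -> K).
Hypothesis HRj : forall j : L, covering_ring (Rj j).
Hypothesis Hmuj : forall j : L, is_prob_measure v (Rj j) (muj j).
Hypothesis Hmu : cylindrical_distribution Rj muj mu.
Hypothesis Hcomp : complete_abs v.
Local Set Implicit Arguments.

Local Notation X := (forall j, Xs j).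
Local Notation cyl := (cyl_ring Rj).
Local Notation N := (Nmu v (cyl_ring Rj) mu).
Local Notation mn := (mnorm v (cyl_ring Rj) mu).

Let HTj : forall j : L, Rj j setT. Proof. exact: (HTj Hmuj). Qed.
Let Hmuj1 : forall (j : L) A, Rj j A -> v (muj j A) <= 1. Proof. exact: (Hmuj1 Hmuj). Qed.
Let cylv1 (C : set X) (h : cyl C) : v (mu C) <= 1. Proof. exact: (cyl_le1 Hv HRj HTj Hmu Hmuj1). Qed.
Let ccov : covering_ring cyl. Proof. exact: (cyl_covering HRj HTj). Qed.
Let cT : cyl setT. Proof. by apply: cylT => //. Qed.
Let madd : forall A B, cyl A -> cyl B -> A `&` B = set0 -> mu (A `|` B) = mu A + mu B.
Proof. exact: (mu_add Hmu). Qed.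
Let mmeas : forall S : set (set X), S `<=` cyl -> shrinking S ->
  \bigcap_(A in S) A = set0 -> forall eps : R, 0 < eps ->
  exists2 B, S B & forall A, S A -> A `<=` B -> v (mu A) <= eps.
Proof. exact: (mu_meas Hv HRj Hmuj Hmu). Qed.
Let mu0' : mu set0 = 0. Proof. exact: (mu0 HRj HTj Hmu). Qed.

Lemma sv_ub (A : set X) : has_ubound (sub_vals v cyl mu A).
Proof. by exists 1 => _ [B [hB _] <-]; apply: cylv1. Qed.

Lemma mn_ge (A B : set X) : cyl B -> B `<=` A -> v (mu B) <= mn A.
Proof. by move=> hB sBA; apply: ub_le_sup; [exact: sv_ub| exists B]. Qed.

Lemma mn_le (A : set X) c : (forall B, cyl B -> B `<=` A -> v (mu B) <= c) -> mn A <= c.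
Proof.
move=> h; apply: ge_sup; first by exists (v (mu set0)), set0 => //; split; [exact: cyl0|].
by move=> _ [B [hB sB] <-]; apply: h.
Qed.

Lemma mn_ge0 (A : set X) : 0 <= mn A.
Proof.
have := mn_ge (cyl0 Rj) (sub0set A).
by rewrite mu0' (v0 Hv).
Qed.

Lemma Nset_ne (x : X) : [set mn U | U in [set U | cyl U /\ U x]] !=set0.
Proof. by exists (mn setT), setT. Qed.

Lemma Nset_lb (x : X) : has_lbound [set mn U | U in [set U | cyl U /\ U x]].
Proof. by exists 0 => _ [U _ <-]; apply: mn_ge0. Qed.

Lemma N_le (x : X) U : cyl U -> U x -> N x <= mn U.
Proof. by move=> hU hx; apply: ge_inf; [exact: Nset_lb| exists U]. Qed.

Lemma N_ge0 (x : X) : 0 <= N x.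
Proof. by apply: lb_le_inf; [exact: Nset_ne| move=> _ [U _ <-]; apply: mn_ge0]. Qed.

Lemma N_lt (x : X) d : N x < d -> exists U, [/\ cyl U, U x & mn U < d].
Proof.
move=> h; have [_ [U [hU hx] <-] hlt] := inf_lt (Nset_ne x) h.
by exists U.
Qed.

Definition pheavy (e : R) (x : X) := heavy v cyl mu e x.

Lemma pheavy_N e x : pheavy e x -> e <= N x.
Proof.
move=> h; apply: lb_le_inf; first exact: Nset_ne.
move=> _ [U [hU hx] <-]; have [A [hA sA hlt]] := h U hU hx.
exact: le_trans (ltW hlt) (mn_ge hA sA).
Qed.

Lemma F1 (E : set X) d : 0 <= d -> cyl E -> (forall x, E x -> N x <= d) -> v (mu E) <= d.
Proof.
move=> d0 hE hN; rewrite leNgt; apply/negP => hlt.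
pose d' := (d + v (mu E)) / 2.
have hd1 : d < d' by rewrite /d'; lra.
have hd2 : d' < v (mu E) by rewrite /d'; lra.
have hd0 : 0 < d' by lra.
have [x [Ex hx]] := heavy_exists Hv ccov cT madd mmeas hd0 hE hd2.
have := pheavy_N hx; have := hN x Ex; lra.
Qed.

Lemma pheavy_coord e x : 0 < e < 1 -> pheavy e x -> Hco v Rj muj e x.
Proof.
move=> /andP [e0 e1] hx j V hV hVx.
have hc : cyl [set y | V (y j)].
  rewrite -box_fam1; apply: cyl_box => k [<-|[]]; rewrite fam1_eq //.
have [A [hA sA hlt]] := hx _ hc hVx.
move: hA hlt => /cyl_ringE [n [J [A' [hA' eA]]]] hlt; rewrite eA in sA hlt.
have [J1 [A1 [hb sb hlt1]]] := ucyl_heavy_box Hv HRj HTj Hmu (ltW e0) hA' hlt.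
have [y hy] : exists y, box J1 A1 y.
  apply: contrapT => hn.
  have eb : box J1 A1 = set0 by apply/seteqP; split => // y hy; apply: hn; exists y.
  by move: hlt1; rewrite eb mu0' (v0 Hv) ltNge (ltW e0).
have hupd : forall t : Xs j, box J1 A1 (upd y j t) -> V t.
  by move=> t /sb /sA /=; rewrite upd_eq.
have [hj|hj] := pselect (List.In j J1).
  exists (A1 j); split; first exact: hb.
    move=> t ht; apply: hupd => k hk; have [ejk|njk] := pselect (j = k).
      by subst k; rewrite upd_eq.
    by rewrite upd_neq //; apply: hy.
  exact: (vmu_box_gt Hv Hmu Hmuj1 hb hlt1 hj).
exists setT; split; first exact: HTj.
  move=> t _; apply: hupd => k hk; have [ejk|njk] := pselect (j = k).
    by subst k.
  by rewrite upd_neq //; apply: hy.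
by rewrite (mujT Hmuj) (v1 Hv).
Qed.

Lemma level_cyl (P : K -> Prop) n (c : 'I_n -> K) (B : 'I_n -> set X) (W : set X) :
  (forall i, cyl (B i)) -> cyl W ->
  cyl ([set x | P (\sum_(i < n) c i * indic_K (B i) x)] `&` W).
Proof.
elim: n P c B W => [|n IH] P c B W hB hW.
  have [hP|hP] := pselect (P 0).
    by have -> : [set x | P (\sum_(i < 0) c i * indic_K (B i) x)] `&` W = W
      by apply/seteqP; split => x; [case| move=> hx; split => //=; rewrite big_ord0].
  have -> : [set x | P (\sum_(i < 0) c i * indic_K (B i) x)] `&` W = set0.
    by apply/seteqP; split => x // [] /=; rewrite big_ord0.
  exact: cyl0.
pose c' := fun i : 'I_n => c (widen_ord (leqnSn n) i).
pose B' := fun i : 'I_n => B (widen_ord (leqnSn n) i).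
have hB' : forall i, cyl (B' i) by move=> i; apply: hB.
have -> : [set x | P (\sum_(i < n.+1) c i * indic_K (B i) x)] `&` W =
   ([set x | P (\sum_(i < n) c' i * indic_K (B' i) x + c ord_max)] `&` (W `&` B ord_max)) `|`
   ([set x | P (\sum_(i < n) c' i * indic_K (B' i) x)] `&` (W `\` B ord_max)).
  apply/seteqP; split => x /=; rewrite big_ord_recr /= /indic_K.
    case: asboolP => hx; rewrite ?mulr1 ?mulr0 ?addr0 => -[hP hW'].
      by left.
    by right.
  case: asboolP => hx; rewrite ?mulr1 ?mulr0 ?addr0.
    by case => -[hP [hW' _]] //; case=> _ [].
  by case => -[hP [hW' hh]].
apply: cylU; first apply: (IH (fun y => P (y + c ord_max))) => //.
  exact: cylI.
apply: IH => //; exact: cylD.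
Qed.

Definition apx (A C : set X) (d : R) := cyl C /\ forall x, ~ (A x <-> C x) -> N x <= d.

Lemma apx_mon A C d d' : d <= d' -> apx A C d -> apx A C d'.
Proof. by move=> hd [hC h]; split => // x /h hx; apply: le_trans hd. Qed.

Lemma apx_mu A C C' d : 0 <= d -> apx A C d -> apx A C' d -> v (mu C - mu C') <= d.
Proof.
move=> d0 [hC h] [hC' h'].
have e1 := m_split ccov madd hC hC'.
have e2 := m_split ccov madd hC' hC.
have -> : mu C - mu C' = mu (C `\` C') - mu (C' `\` C) by rewrite e1 e2 setIC; ring.
apply: (vB_le Hv); apply: F1 => //; try exact: cylD.
- move=> x [hx nx]; have [ax|ax] := pselect (A x).
    by apply: h'; case=> /(_ ax).
  by apply: h; case=> _ /(_ hx).
- move=> x [hx nx]; have [ax|ax] := pselect (A x).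
    by apply: h; case=> /(_ ax).
  by apply: h'; case=> _ /(_ hx).
Qed.

Lemma v_ge1_of_lt (a : K) : v (a - 1) < 1 -> 1 <= v a.
Proof.
move=> h; rewrite leNgt; apply/negP => ha.
have e : (1 : K) = a - (a - 1) by ring.
have : v 1 < 1 by rewrite {1}e; apply: (vD_lt Hv) => //; rewrite (vN Hv).
by rewrite (v1 Hv) ltxx.
Qed.

Lemma compl_apx A : completion v cyl mu A -> forall d, 0 < d -> exists C, apx A C d.
Proof.
move=> [fn [hstep hcv]] d d0.
have [M hM] := hcv d d0.
have [n [c [B [hB ef]]]] := hstep M.
pose C := [set x | v (fn M x - 1) < 1].
exists C; split.
  have -> : C = [set x | v (\sum_(i < n) c i * indic_K (B i) x - 1) < 1] `&` setT.
    by rewrite setIT /C ef.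
  by apply: (level_cyl (fun y => v (y - 1) < 1)) => //; exact: cT.
move=> x hx; have hMx := hM M (leqnn M) x.
have hN0 := N_ge0 x.
move: hMx; rewrite /indic_K; case: asboolP => ax hMx.
- have hC : ~ C x by move=> cx; apply: hx; split.
  have h1 : 1 <= v (1 - fn M x) by rewrite (vBC Hv) leNgt; apply/negP.
  apply: le_trans hMx; rewrite -[X in X <= _]mul1r; apply: ler_wpM2r => //.
- have hC : C x by apply: contrapT => nc; apply: hx; split.
  have h1 : 1 <= v (0 - fn M x) by rewrite sub0r (vN Hv); apply: v_ge1_of_lt.
  apply: le_trans hMx; rewrite -[X in X <= _]mul1r; apply: ler_wpM2r => //.
Qed.

Lemma apx_compl A : (forall d, 0 < d -> exists C, apx A C d) -> completion v cyl mu A.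
Proof.
move=> h.
have hk : forall k : nat, exists C, apx A C (k.+1%:R^-1).
  by move=> k; apply: h; rewrite invr_gt0 ltr0n.
pose C k := proj1_sig (cid (hk k)).
have hC : forall k, apx A (C k) (k.+1%:R^-1) by move=> k; rewrite /C; case: cid.
exists (fun k => indic_K (C k)); split.
  move=> k; exists 1%N, (fun=> 1), (fun=> C k); split; first by move=> i; case: (hC k).
  by apply: funext => x; rewrite big_ord1 mul1r.
move=> eps e0; have [M hM] := arch_tol e0; exists M => k hkM x.
have [ex|nx] := pselect (A x <-> C k x).
  have -> : indic_K A x = indic_K (C k) x.
    rewrite /indic_K; case: asboolP => ax; case: asboolP => cx //.
    - by exfalso; apply: cx; apply/ex.
    - by exfalso; apply: ax; apply/ex.
  by rewrite subrr (v0 Hv) mul0r ltW.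
have hN := (proj2 (hC k)) x nx.
have hv : v (indic_K A x - indic_K (C k) x) = 1.
  rewrite /indic_K; case: asboolP => ax; case: asboolP => cx.
  - by exfalso; apply: nx.
  - by rewrite subr0 (v1 Hv).
  - by rewrite sub0r (vN Hv) (v1 Hv).
  - by exfalso; apply: nx.
by rewrite hv mul1r; apply: le_trans hN (hM _ hkM).
Qed.



Lemma apx_refl A d : cyl A -> apx A A d.
Proof. by move=> hA; split => // x []; split. Qed.

Lemma compl_cyl A : cyl A -> completion v cyl mu A.
Proof. by move=> hA; apply: apx_compl => d _; exists A; apply: apx_refl. Qed.

Lemma apx_U A B C D d : apx A C d -> apx B D d -> apx (A `|` B) (C `|` D) d.
Proof.
move=> [hC h1] [hD h2]; split; first exact: cylU.
move=> x hx; have [e1|e1] := pselect (A x <-> C x); last exact: h1.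
have [e2|e2] := pselect (B x <-> D x); last exact: h2.
by exfalso; apply: hx; split => -[/e1|/e2]; [left|right|left|right].
Qed.

Lemma apx_I A B C D d : apx A C d -> apx B D d -> apx (A `&` B) (C `&` D) d.
Proof.
move=> [hC h1] [hD h2]; split; first exact: cylI.
move=> x hx; have [e1|e1] := pselect (A x <-> C x); last exact: h1.
have [e2|e2] := pselect (B x <-> D x); last exact: h2.
by exfalso; apply: hx; split => -[/e1 ? /e2 ?].
Qed.

Lemma apx_D A B C D d : apx A C d -> apx B D d -> apx (A `\` B) (C `\` D) d.
Proof.
move=> [hC h1] [hD h2]; split; first exact: cylD.
move=> x hx; have [e1|e1] := pselect (A x <-> C x); last exact: h1.
have [e2|e2] := pselect (B x <-> D x); last exact: h2.
by exfalso; apply: hx; split => -[/e1 ? hn]; split => // /e2.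
Qed.

Lemma compl_op (op : set X -> set X -> set X) A B :
  (forall C D d, apx A C d -> apx B D d -> apx (op A B) (op C D) d) ->
  completion v cyl mu A -> completion v cyl mu B -> completion v cyl mu (op A B).
Proof.
move=> hop hA hB; apply: apx_compl => d d0.
have [C hC] := compl_apx hA d0; have [D hD] := compl_apx hB d0.
by exists (op C D); apply: hop.
Qed.

Lemma compl_cov : covering_ring (completion v cyl mu).
Proof.
split.
- by move=> A B; apply: (compl_op (op := setU)) => C D d; apply: apx_U.
- by move=> A B; apply: (compl_op (op := setI)) => C D d; apply: apx_I.
- by move=> A B; apply: (compl_op (op := setD)) => C D d; apply: apx_D.
- by apply/seteqP; split => x // _; exists setT => //; apply: compl_cyl.
Qed.

Lemma v_small_eq0 (a : K) : (forall d, 0 < d -> v a <= d) -> a = 0.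
Proof.
move=> h; apply: (v_eq0 Hv); apply/eqP; rewrite eq_le v_ge0 // andbT.
rewrite leNgt; apply/negP => hp; have := h _ (divr_gt0 hp (ltr0n R 2)).
have := v_ge0 Hv a; lra.
Qed.

Definition nuval A l := forall d, 0 < d -> forall C, apx A C d -> v (l - mu C) <= d.

Lemma nu_exists A : completion v cyl mu A -> exists l, nuval A l.
Proof.
move=> hA.
have hk : forall k : nat, exists C, apx A C (k.+1%:R^-1).
  by move=> k; apply: compl_apx => //; rewrite invr_gt0 ltr0n.
pose C k := proj1_sig (cid (hk k)).
have hC : forall k, apx A (C k) (k.+1%:R^-1) by move=> k; rewrite /C; case: cid.
pose u k := mu (C k).
have hcau : forall eps : R, 0 < eps -> exists M, forall m n, (M <= m)%N -> (M <= n)%N ->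
    v (u m - u n) <= eps.
  move=> eps e0; have [M hM] := arch_tol e0; exists M => m n hm hn.
  apply: apx_mu; first exact: ltW.
    exact: apx_mon (hM _ hm) (hC m).
  exact: apx_mon (hM _ hn) (hC n).
have [l hl] := Hcomp u hcau.
exists l => d d0 D hD; rewrite leNgt; apply/negP => hw.
have [w hwd] : exists w, w = v (l - mu D) by exists (v (l - mu D)).
rewrite -hwd in hw.
have w0 : 0 < w by apply: le_lt_trans hw; exact: ltW.
have [M1 hM1] := hl (w / 2) (divr_gt0 w0 (ltr0n R 2)).
have [M2 hM2] := arch_tol d0.
pose n := maxn M1 M2.
have h1 := hM1 n (leq_maxl _ _).
have h2 : v (u n - mu D) <= d.
  apply: apx_mu; first exact: ltW.
    exact: apx_mon (hM2 _ (leq_maxr _ _)) (hC n).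
  exact: hD.
have : w <= Num.max d (w / 2).
  rewrite {1}hwd; have -> : l - mu D = (u n - mu D) - (u n - l) by ring.
  apply: (vB_le Hv); rewrite le_max ?h2 ?h1 ?orbT //.
rewrite le_max => /orP [] hh; lra.
Qed.

Lemma nuval_unique A l l' : completion v cyl mu A -> nuval A l -> nuval A l' -> l = l'.
Proof.
move=> hA h h'; apply/eqP; rewrite -subr_eq0; apply/eqP; apply: v_small_eq0 => d d0.
have [C hC] := compl_apx hA d0.
have -> : l - l' = (l - mu C) - (l' - mu C) by ring.
by apply: (vB_le Hv); [apply: h| apply: h'].
Qed.

Definition nu (A : set X) : K :=
  match pselect (completion v cyl mu A) with
  | left h => proj1_sig (cid (nu_exists h))
  | right _ => 0 end.

Lemma nuP A : completion v cyl mu A -> nuval A (nu A).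
Proof. by move=> hA; rewrite /nu; case: pselect => // h; case: cid. Qed.

Lemma nu_mu A : cyl A -> nu A = mu A.
Proof.
move=> hA; apply: (nuval_unique (compl_cyl hA)); first exact: nuP (compl_cyl hA).
move=> d d0 C hC; apply: apx_mu; [exact: ltW| exact: apx_refl| exact: hC].
Qed.

Lemma nu_le1 A : completion v cyl mu A -> v (nu A) <= 1.
Proof.
move=> hA; have [C hC] := compl_apx hA ltr01.
have h1 := nuP hA ltr01 hC.
have -> : nu A = (nu A - mu C) + mu C by ring.
by apply: (vD_le Hv) => //; apply: cylv1; case: hC.
Qed.

Lemma nu_add A B : completion v cyl mu A -> completion v cyl mu B -> A `&` B = set0 ->
  nu (A `|` B) = nu A + nu B.
Proof.
move=> hA hB hAB; apply/eqP; rewrite -subr_eq0; apply/eqP; apply: v_small_eq0 => d d0.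
have [C hC] := compl_apx hA d0; have [D hD] := compl_apx hB d0.
have hU := apx_U hC hD.
have hABc : completion v cyl mu (A `|` B) by case: compl_cov => h _ _ _; apply: h.
have cC : cyl C by case: hC. have cD : cyl D by case: hD.
have hCD : v (mu (C `&` D)) <= d.
  apply: F1; [exact: ltW| exact: cylI|].
  move=> x [cx dx]; have [ax|ax] := pselect (A x).
    have bx : ~ B x by move=> bx; have : (A `&` B) x by []; rewrite hAB.
    by apply: (proj2 hD); case=> _ /(_ dx).
  by apply: (proj2 hC); case=> _ /(_ cx).
have em := m_union ccov madd cC cD.
have -> : nu (A `|` B) - (nu A + nu B) =
  (nu (A `|` B) - mu (C `|` D)) - (nu A - mu C) - (nu B - mu D) - mu (C `&` D).
  by rewrite em; ring.
apply: (vB_le Hv) => //; apply: (vB_le Hv); first apply: (vB_le Hv).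
- by have := nuP hABc d0 hU.
- by have := nuP hA d0 hC.
- by have := nuP hB d0 hD.
Qed.

Lemma nu_meas : forall S : set (set X), S `<=` completion v cyl mu -> shrinking S ->
  \bigcap_(A in S) A = set0 -> forall eps : R, 0 < eps ->
  exists2 B, S B & forall A, S A -> A `<=` B -> v (nu A) <= eps.
Proof.
move=> S SR Ssh Scap eps e0.
have [B0 SB0] : exists B, S B.
  apply: contrapT => hn; have [x0 _] := X_point Hv HRj Hmuj.
  have : (\bigcap_(A in S) A) x0 by move=> A SA; exfalso; apply: hn; exists A.
  by rewrite Scap.
case: (leP 1 eps) => he1.
  by exists B0 => // A SA _; apply: le_trans he1; apply: nu_le1; apply: SR.
have he : 0 < eps < 1 by rewrite e0 he1.
pose dl := eps / 2.
have dl0 : 0 < dl by rewrite /dl; lra.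
have dle : dl < eps by rewrite /dl; lra.
apply: contrapT => hno.
have hbig : forall B, S B -> exists A, [/\ S A, A `<=` B & eps < v (nu A)].
  move=> B SB; apply: contrapT => hn; apply: hno; exists B => // A SA sAB.
  by rewrite leNgt; apply/negP => hlt; apply: hn; exists A.
pose G := pheavy eps.
have agree : forall A C y, apx A C dl -> G y -> (A y <-> C y).
  move=> A C y hC Gy; apply: contrapT => hn.
  have := (proj2 hC) y hn; have := pheavy_N Gy; lra.
pose S' := [set A `&` G | A in S].
have [U [hU sU]] : exists U, ultra_sys U /\ S' `<=` U.
  apply: ultra_of_base.
  - by exists (B0 `&` G); exists B0.
  - move=> _ _ [A SA <-] [B SB <-]; have [C [SC sC]] := Ssh A B SA SB.
    exists (C `&` G); split; first by exists C.
    by move=> x [/sC [hA hB] hH].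
  - move=> _ [A SA <-]; have [A' [SA' sA' hlt]] := hbig A SA.
    have [C' hC'] := compl_apx (SR A' SA') dl0.
    have h1 := nuP (SR A' SA') dl0 hC'.
    have h2 : eps < v (mu C').
      rewrite ltNge; apply/negP => hle.
      have : v (nu A') <= eps.
        have -> : nu A' = (nu A' - mu C') + mu C' by ring.
        by apply: (vD_le Hv) => //; exact: ltW (le_lt_trans h1 dle).
      by rewrite leNgt hlt.
    have [y [Cy Gy]] := heavy_exists Hv ccov cT madd mmeas e0 (proj1 hC') h2.
    by exists y; split => //; apply: sA'; apply/(agree _ _ _ hC' Gy).
have UG : U G.
  by case: hU => _ hS _ _; apply: hS (sU _ (ex_intro2 _ _ B0 SB0 erefl)) => x [].
have UH : U (Hco v Rj muj eps).
  by case: hU => _ hS _ _; apply: hS UG => x; apply: pheavy_coord.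
have [x hx] := ultra_limit Hv HRj Hmuj e0 hU UH.
have Gx : G x.
  move=> V /cyl_ringE [m [J [A [hA eV]]]]; rewrite eV => -[i hi hbx].
  have Ub := ultra_box hU hx (hA i hi) hbx.
  have [y [by_ Gy]] := ultra_meet hU (let: And4 _ _ hI _ := hU in hI _ _ Ub UG).
  have [A' [hA' sA' hlt]] := Gy _ (cyl_box (hA i hi)) by_.
  by exists A'; split => // z /sA' hz; exists i.
have : (\bigcap_(A in S) A) x.
  move=> A SA; have [C hC] := compl_apx (SR A SA) dl0.
  apply/(agree _ _ _ hC Gx); apply: (ultra_cyl_mem HRj Hmuj hU hx (proj1 hC)).
  case: hU => _ hS _ _; apply: hS (sU _ (ex_intro2 _ _ A SA erefl)).
  by move=> y [Ay Gy]; apply/(agree _ _ _ hC Gy).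
by rewrite Scap.
Qed.

End Compl.

Theorem theorem2p8 (R : realType) (K : fieldType) (v : K -> R) (p : nat)
  (Hv : nonarch_abs v) (Hnt : nontrivial_abs v) (Hcomp : complete_abs v)
  (HQp : contains_Qp v p)
  (L : Type) (Xs : L -> Type) (Rj : forall j, set (set (Xs j)))
  (muj : forall j, set (Xs j) -> K)
  (HRj : forall j, covering_ring (Rj j))
  (Hmuj : forall j, is_prob_measure v (Rj j) (muj j))
  (Hcompl : forall j, Rj j = completion v (Rj j) (muj j))
  (Hhaus : forall j, tau_hausdorff (Rj j))
  (mu : set (forall j, Xs j) -> K)
  (Hmu : cylindrical_distribution Rj muj mu) :
  is_prob_measure v (cyl_ring Rj) mu /\
  exists nu : set (forall j, Xs j) -> K,
    [/\ forall A, cyl_ring Rj A -> nu A = mu A,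
        covering_ring (completion v (cyl_ring Rj) mu) &
        is_prob_measure v (completion v (cyl_ring Rj) mu) nu].
Proof.
have HTj' := HTj Hmuj.
have Hmuj1' := Hmuj1 Hmuj.
have cT : cyl_ring Rj setT by apply: cylT.
have muT : mu setT = 1.
  rewrite -(box_nil (fun j => @setT (Xs j))) (mu_box Hmu) //.
  by rewrite big_nil.
have hmn1 : forall (Rg : set (set (forall j, Xs j))) (m : set (forall j, Xs j) -> K),
    Rg setT -> m setT = 1 -> (forall A, Rg A -> v (m A) <= 1) -> mnorm v Rg m setT = 1.
  move=> Rg m hT hm1 hle; apply/eqP; rewrite eq_le; apply/andP; split.
    apply: ge_sup; first by exists (v (m setT)), setT.
    by move=> _ [B [hB _] <-]; apply: hle.
  rewrite -{1}(v1 Hv) -hm1; apply: ub_le_sup; last by exists setT.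
  by exists 1 => _ [B [hB _] <-]; apply: hle.
split.
  split => //.
  - split; [exact: (mu_add Hmu)| move=> A _; exact: (sv_ub Hv HRj Hmuj Hmu)|].
    exact: (mu_meas Hv HRj Hmuj Hmu).
  - by apply: hmn1 => // A hA; apply: (cyl_le1 Hv HRj HTj' Hmu Hmuj1').
exists (nu Hv HRj Hmuj Hmu Hcomp); split.
- by move=> A hA; apply: nu_mu.
- exact: compl_cov.
- have cTc : completion v (cyl_ring Rj) mu setT by apply: compl_cyl.
  have nuT : nu Hv HRj Hmuj Hmu Hcomp setT = 1 by rewrite nu_mu.
  split => //.
  + split.
    * by move=> A B hA hB hAB; apply: nu_add.
    * by move=> A hA; exists 1 => _ [B [hB _] <-]; apply: nu_le1.
    * exact: nu_meas.
  + by apply: hmn1 => // A hA; apply: nu_le1.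
Qed.
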